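(* Let $S$ be a finite set, $G$ a finite group and $f:S\to G$ a function. Let $\{\rho\}$ be a complete set of representatives of the equivalence classes of irreducible unitary representations $\rho: G\to U(V_\rho)$, and for each $\rho$ let $P_\rho$ be an orthogonal projector on $V_\rho$, with at least one $P_\rho\neq 0$. Let $\phi=\sum_\rho c_\rho\,\rho^\dagger(P_\rho)\in\mathbb{C}[G]$ with all $c_\rho\in\mathbb{C}$ nonzero. Let $u_S=|S|^{-1/2}\sum_{s\in S}|s\rangle$, let $U_f$ be the unitary on $\mathbb{C}[S]\otimes\mathbb{C}[G]$ with $U_f(|s\rangle\otimes|g\rangle)=|s\rangle\otimes|f(s)g\rangle$, and let $\psi=U_f(u_S\otimes\phi)$. (a) If $f$ is $P_\rho$-constant, then $\psi=u_S\otimes\chi$ for some nonzero $\chi\in\mathbb{C}[G]$; in particular a projective measurement of the first factor onto the span of $u_S$ succeeds with probability 1. (b) If $f$ is $P_\rho$-balanced, then $(\langle u_S|\otimes\mathrm{id})\psi=0$; in particular that measurement succeeds with probability 0.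
   Context: For a finite set $X$, $\mathbb{C}[X]$ is the Hilbert space with orthonormal basis $\{|x\rangle: x\in X\}$; $\mathbb{C}[G]$ is also the group algebra. Each $\rho$ is extended linearly to $\rho:\mathbb{C}[G]\to\mathrm{End}(V_\rho)$, where $\mathrm{End}(V_\rho)$ carries the Hilbert–Schmidt inner product, and $\rho^\dagger(M)=\sum_{h\in G}\mathrm{Tr}(\rho(h)^\dagger M)|h\rangle$ is its adjoint. Definitions: $f$ is $P_\rho$-balanced if $\sum_{s\in S}\rho(f(s))P_\rho=0$ for every $\rho$; $f$ is $P_\rho$-constant if for every $\rho$ there is $x_\rho\in\mathrm{End}(V_\rho)$ with $\rho(f(s))P_\rho=x_\rho$ for all $s\in S$. (For $G=\mathbb{Z}_2$, $P_{\text{trivial}}=0$ and $P_{\text{sign}}=\mathrm{id}$ this recovers the usual constant/balanced functions and the Deutsch–Jozsa algorithm.) *)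

(* Defs.v *)
From HB Require Import structures.
From mathcomp Require Import all_boot all_order all_algebra all_fingroup all_solvable all_field all_character.
Set Implicit Arguments. Unset Strict Implicit. Unset Printing Implicit Defensive.
Import Order.TTheory GRing.Theory Num.Theory.
Local Open Scope ring_scope.

(* C[X] : the Hilbert space with orthonormal basis |x>, x in X *)
Notation Cvec X := {ffun X -> algC}.

Definition ket (X : finType) (x : X) : Cvec X := [ffun y => (y == x)%:R].

Definition adjmx m n (A : 'M[algC]_(m, n)) : 'M[algC]_(n, m) := (map_mx Num.conj A)^T.

Definition unitary_repr (gT : finGroupType) n
  (r : mx_representation algC [set: gT]%G n) : Prop :=
  forall g : gT, adjmx (r g) *m r g = 1%:M.

Definition orth_proj n (P : 'M[algC]_n) : Prop := P *m P = P /\ adjmx P = P.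

(* rho^dagger(M) = sum_h Tr(rho(h)^dagger M) |h>, i.e. coefficient at h *)
Definition rho_dag (gT : finGroupType) n (r : mx_representation algC [set: gT]%G n)
  (M : 'M[algC]_n) : Cvec gT := [ffun h => \tr (adjmx (r h) *m M)].

Definition uS (S : finType) : Cvec S := [ffun s => (sqrtC (#|S|%:R))^-1 * \sum_(t : S) ket t s].

(* tensor product u (x) v in C[S] (x) C[G] = C[S * G] *)
Definition tens (S T : finType) (u : Cvec S) (v : Cvec T) : Cvec (S * T)%type :=
  [ffun p => u p.1 * v p.2].

(* U_f (coordinatewise), the linear extension of |s>|g> |-> |s>|f(s) g> *)
Definition Uf (S : finType) (gT : finGroupType) (f : S -> gT)
  (w : Cvec (S * gT)%type) : Cvec (S * gT)%type :=
  [ffun q => \sum_(p : S * gT) w p * ket (p.1, f p.1 * p.2)%g q].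

Definition partial_bra (S T : finType) (u : Cvec S) (w : Cvec (S * T)%type) : Cvec T :=
  [ffun t => \sum_(s : S) Num.conj (u s) * w (s, t)].

Definition P_balanced (S : finType) (gT : finGroupType) (I : finType) (n : I -> nat)
  (rho : forall i, mx_representation algC [set: gT]%G (n i))
  (P : forall i, 'M[algC]_(n i)) (f : S -> gT) : Prop :=
  forall i, \sum_(s : S) rho i (f s) *m P i = 0.

Definition P_constant (S : finType) (gT : finGroupType) (I : finType) (n : I -> nat)
  (rho : forall i, mx_representation algC [set: gT]%G (n i))
  (P : forall i, 'M[algC]_(n i)) (f : S -> gT) : Prop :=
  forall i, exists x : 'M[algC]_(n i), forall s, rho i (f s) *m P i = x.

(* Main.v *)
Require Import Defs.
From HB Require Import structures.
From mathcomp Require Import all_boot all_order all_algebra all_fingroup all_solvable all_field all_character.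
Import Order.TTheory GRing.Theory Num.Theory.
Local Open Scope ring_scope.
Set Implicit Arguments. Unset Strict Implicit.

Definition Tm (gT : finGroupType) n1 n2 (r1 : mx_representation algC [set: gT]%G n1)
  (r2 : mx_representation algC [set: gT]%G n2) (M : 'M[algC]_(n2, n1)) : 'M[algC]_(n2, n1) :=
  \sum_(g : gT) r2 g *m M *m r1 (g^-1)%g.

Lemma Tm_hom (gT : finGroupType) n1 n2 (r1 : mx_representation algC [set: gT]%G n1)
  (r2 : mx_representation algC [set: gT]%G n2) M h :
  r2 h *m Tm r1 r2 M = Tm r1 r2 M *m r1 h.
Proof.
rewrite /Tm mulmx_sumr mulmx_suml [RHS](reindex_inj (mulgI h)) /=.
apply: eq_bigr => g _.
rewrite !mulmxA -repr_mxM ?inE // -!mulmxA -repr_mxM ?inE //.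
by rewrite invMg -mulgA mulVg mulg1.
Qed.

Lemma Tm_zero (gT : finGroupType) n1 n2 (r1 : mx_representation algC [set: gT]%G n1)
  (r2 : mx_representation algC [set: gT]%G n2) M :
  mx_irreducible r1 -> mx_irreducible r2 -> ~ mx_rsim r2 r1 -> Tm r1 r2 M = 0.
Proof.
move=> /mx_irrP [_ irr1] /mx_irrP [_ irr2] nsim.
set T := Tm r1 r2 M.
have [//|nzT] := eqVneq T 0; exfalso; apply: nsim.
have homT h : r2 h *m T = T *m r1 h by apply: Tm_hom.
have modK : mxmodule r2 (kermx T).
  apply/mxmoduleP => x _; apply/sub_kermxP.
  by rewrite -mulmxA homT mulmxA mulmx_ker mul0mx.
have freeT : row_free T.
  rewrite -kermx_eq0; apply: contraNT nzT => nzK.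
  have := irr2 _ modK nzK; rewrite -sub1mx => /sub_kermxP.
  by rewrite mul1mx => ->.
have modT : mxmodule r1 T.
  by apply/mxmoduleP => x _; rewrite -homT submxMl.
have fullT : row_full T.
  have := irr1 <<T>>%MS; rewrite (eqmx_module _ (genmxE T)) (eqmx_eq0 (genmxE T)).
  by rewrite /row_full genmxE => /(_ modT nzT).
have e : n2 = n1.
  exact: etrans (esym (eqP freeT)) (eqP fullT).
by exists T => // x _; rewrite homT.
Qed.

Lemma Tm_scalar (gT : finGroupType) n (r : mx_representation algC [set: gT]%G n) M :
  mx_irreducible r -> Tm r r M = ((\tr M *+ #|gT|) / n%:R)%:M.
Proof.
move=> irr.
have n_gt0 : (0 < n)%N by case/mx_irrP: irr.
have airr := group_closure_closed_field irr.
have cT : centgmx r (Tm r r M) by apply/centgmxP => x _; rewrite Tm_hom.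
have /is_scalar_mxP [a ea] := mx_abs_irr_cent_scalar airr cT.
have htr : \tr (Tm r r M) = \tr M *+ #|gT|.
  rewrite /Tm raddf_sum /= -sumr_const; apply: eq_bigr => g _.
  by rewrite mxtrace_mulC mulmxA -repr_mxM ?inE // mulVg repr_mx1 mul1mx.
rewrite ea; congr (_%:M); move: htr; rewrite ea mxtrace_scalar => <-.
by rewrite -[a *+ n]mulr_natr mulfK // pnatr_eq0 -lt0n.
Qed.

Lemma mul_delta_entry (R : comPzRingType) m p q s (A : 'M[R]_(m, p)) (B : 'M[R]_(q, s)) a b k l :
  (A *m delta_mx b k *m B) a l = A a b * B k l.
Proof.
rewrite -mulmxA.
rewrite mxE (bigD1 b) //= big1 ?addr0; last first.
  move=> j /negbTE nj; rewrite mxE (bigD1 k) //= big1 ?addr0.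
    by rewrite mxE nj /= mul0r mulr0.
  by move=> j' /negbTE nj'; rewrite mxE nj' andbF mul0r.
rewrite mxE (bigD1 k) //= big1 ?addr0.
  by rewrite mxE !eqxx mul1r.
by move=> j' /negbTE nj'; rewrite mxE nj' andbF mul0r.
Qed.

Lemma coef_sum (gT : finGroupType) n1 n2 (r1 : mx_representation algC [set: gT]%G n1)
  (r2 : mx_representation algC [set: gT]%G n2) (Q : 'M_n1) a b :
  (\sum_(g : gT) \tr (r1 (g^-1)%g *m Q) *: r2 g) a b
    = \sum_(k < n1) (Tm r1 r2 (delta_mx b k) *m Q) a k.
Proof.
rewrite summxE.
under [RHS]eq_bigr => k _ do rewrite /Tm mulmx_suml summxE.
rewrite exchange_big /=; apply: eq_bigr => g _.
rewrite mxE /mxtrace mulr_suml; apply: eq_bigr => k _.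
by rewrite -(mulmxA (r2 g *m delta_mx b k)) mul_delta_entry mulrC.
Qed.

Lemma mxtrace_delta (R : pzSemiRingType) n (b k : 'I_n) :
  \tr (delta_mx b k : 'M[R]_n) = (b == k)%:R.
Proof.
rewrite /mxtrace (bigD1 b) //= big1 ?addr0; first by rewrite mxE eqxx.
by move=> j /negbTE nj; rewrite mxE nj.
Qed.

Lemma orth_ne (gT : finGroupType) n1 n2 (r1 : mx_representation algC [set: gT]%G n1)
  (r2 : mx_representation algC [set: gT]%G n2) (Q : 'M_n1) :
  mx_irreducible r1 -> mx_irreducible r2 -> ~ mx_rsim r2 r1 ->
  \sum_(g : gT) \tr (r1 (g^-1)%g *m Q) *: r2 g = 0.
Proof.
move=> i1 i2 ns; apply/matrixP => a b; rewrite coef_sum mxE big1 // => k _.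
by rewrite Tm_zero // mul0mx mxE.
Qed.

Lemma orth_eq (gT : finGroupType) n (r : mx_representation algC [set: gT]%G n) (Q : 'M_n) :
  mx_irreducible r ->
  \sum_(g : gT) \tr (r (g^-1)%g *m Q) *: r g = (#|gT|%:R / n%:R) *: Q.
Proof.
move=> ir; apply/matrixP => a b; rewrite coef_sum mxE (bigD1 b) //= big1 ?addr0.
  rewrite Tm_scalar // mul_scalar_mx mxE mxtrace_delta eqxx mulr1n.
  by [].
move=> k /negbTE nk; rewrite Tm_scalar // mul_scalar_mx mxE mxtrace_delta.
by rewrite eq_sym nk mulr0n mul0rn mul0r mul0r.
Qed.

Lemma adj_inv (gT : finGroupType) n (r : mx_representation algC [set: gT]%G n) g :
  unitary_repr r -> adjmx (r g) = r (g^-1)%g.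
Proof.
move=> ru; have h := ru g; have [_ u] := mulmx1_unit h.
by rewrite repr_mxV ?inE // -[adjmx _]mulmx1 -(mulmxV u) mulmxA h mul1mx.
Qed.

Lemma Uf_E (S : finType) (gT : finGroupType) (f : S -> gT) w s g :
  Uf f w (s, g) = w (s, ((f s)^-1 * g)%g).
Proof.
rewrite ffunE (bigD1 (s, ((f s)^-1 * g)%g)) //= big1 ?addr0.
  by rewrite ffunE mulKVg eqxx mulr1.
move=> [s' g'] /= ne; rewrite ffunE.
case: eqP => [[e1 e2]|]; last by rewrite mulr0.
by move: ne; rewrite e2 -e1 mulKg eqxx.
Qed.

Lemma uS_E (S : finType) s : uS S s = (sqrtC #|S|%:R)^-1.
Proof.
rewrite ffunE (bigD1 s) //= big1 ?addr0; first by rewrite ffunE eqxx mulr1.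
by move=> t /negbTE nt; rewrite ffunE eq_sym nt.
Qed.

Lemma sum_scale (T : finType) m p (a : algC) (t : T -> algC) (M : T -> 'M[algC]_(m, p)) :
  \sum_(g : T) (a * t g) *: M g = a *: \sum_(g : T) t g *: M g.
Proof. by rewrite scaler_sumr; apply: eq_bigr => g _; rewrite scalerA. Qed.

Unset Implicit Arguments.
Theorem mainTheorem7 (S : finType) (gT : finGroupType) (f : S -> gT)
  (I : finType) (n : I -> nat)
  (rho : forall i, mx_representation algC [set: gT]%G (n i))
  (rho_irr : forall i, mx_irreducible (rho i))
  (rho_unit : forall i, unitary_repr (rho i))
  (rho_ineq : forall i j, mx_rsim (rho i) (rho j) -> i = j)
  (rho_compl : forall m (r : mx_representation algC [set: gT]%G m),
      mx_irreducible r -> unitary_repr r -> exists i, mx_rsim r (rho i))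
  (P : forall i, 'M[algC]_(n i))
  (P_proj : forall i, orth_proj (P i))
  (P_nz : exists i, P i != 0)
  (c : I -> algC) (c_nz : forall i, c i != 0)
  (S_nonempty : (0 < #|S|)%N) :
  let phi : Cvec gT := [ffun g => \sum_(i : I) c i * rho_dag (rho i) (P i) g] in
  let psi : Cvec (S * gT)%type := Uf f (tens (uS S) phi) in
  (P_constant rho P f -> exists chi : Cvec gT, chi != 0 /\ psi = tens (uS S) chi) /\
  (P_balanced rho P f -> partial_bra (uS S) psi = 0).
Proof.
move=> phi psi.
have phiE y g : phi ((y^-1) * g)%g
    = \sum_i c i * \tr (rho i (g^-1)%g *m (rho i y *m P i)).
  rewrite ffunE; apply: eq_bigr => i _.
  by rewrite /rho_dag ffunE adj_inv // invMg invgK repr_mxM ?inE // mulmxA.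
have phiE1 g : phi g = \sum_i c i * \tr (rho i (g^-1)%g *m P i).
  by rewrite -[g]mul1g -invg1 phiE; apply: eq_bigr => i _; rewrite repr_mx1 mul1mx invg1 mul1g.
have psiE s g : psi (s, g) = uS S s * phi ((f s)^-1 * g)%g.
  by rewrite /psi Uf_E ffunE.
have phi_nz : phi != 0.
  apply/eqP => ph0; case: P_nz => j; apply/negP; rewrite negbK.
  have : \sum_(g : gT) phi g *: rho j g = 0.
    by rewrite ph0; apply: big1 => g _; rewrite ffunE scale0r.
  under eq_bigr do rewrite phiE1 scaler_suml.
  rewrite exchange_big /=.
  under eq_bigr do rewrite sum_scale.
  rewrite (bigD1 j) //= [X in _ + X = _]big1 ?addr0; last first.
    move=> i nij; rewrite orth_ne ?scaler0 // => /rho_ineq ej.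
    by move: nij; rewrite ej eqxx.
  rewrite orth_eq // scalerA; move/eqP; rewrite scaler_eq0 => /orP [|//].
  have ng : #|gT| != 0%N by rewrite -lt0n; apply/card_gt0P; exists 1%g.
  have nn : n j != 0%N by rewrite -lt0n; case/mx_irrP: (rho_irr j).
  by rewrite !mulf_eq0 invr_eq0 !pnatr_eq0 (negbTE (c_nz j)) (negbTE ng) (negbTE nn).
split.
  move=> hP; case/card_gt0P: S_nonempty => s0 _.
  exists [ffun g => phi ((f s0)^-1 * g)%g]; split.
    apply: contraNneq phi_nz => chi0; apply/eqP/ffunP => h.
    have := congr1 (fun F : Cvec gT => F (f s0 * h)%g) chi0; rewrite /= !ffunE mulKg => ->.
    by [].
  apply/ffunP => -[s g]; rewrite psiE phiE [tens _ _ _]ffunE /= (ffunE (fun g0 => phi ((f s0)^-1 * g0)%g)) phiE; congr (_ * _).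
  by apply: eq_bigr => i _; have [x hx] := hP i; rewrite !hx.
move=> hP; apply/ffunP => t; rewrite !ffunE.
under eq_bigr do rewrite psiE !uS_E phiE.
rewrite -mulr_sumr; apply/eqP; rewrite mulf_eq0; apply/orP; right.
rewrite -mulr_sumr mulf_eq0; apply/orP; right; apply/eqP.
rewrite exchange_big /= big1 // => i _.
rewrite -mulr_sumr -raddf_sum /= -mulmx_sumr hP mulmx0 mxtrace0.
by rewrite mulr0.
Qed.
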